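(* With notation as in the context, for all $1\le i,j,h,k\le m+n$, $r\ge1$ and $x,y_1,\dots,y_r\in \mathrm{Mat}_\ell$, $$[t_{ij;\mathfrak{b}}(x),t_{hk;\mathfrak{b}}(y_1\otimes\cdots\otimes y_r)]=(-1)^{|i||j|+|i||h|+|j||h|}\sum_{s=1}^r\Big(t_{hj;\mathfrak{b}}(y_1\otimes\cdots\otimes y_{s-1})\,t_{ik;\mathfrak{b}}(xy_s\otimes y_{s+1}\otimes\cdots\otimes y_r)-t_{hj;\mathfrak{b}}(y_1\otimes\cdots\otimes y_{s-1}\otimes y_sx)\,t_{ik;\mathfrak{b}}(y_{s+1}\otimes\cdots\otimes y_r)\Big),$$ where $xy_s$, $y_sx$ are matrix products in $\mathrm{Mat}_\ell$, the bracket is the supercommutator in $U(\mathfrak{gl}_{M|N})$, and an empty tensor is interpreted as $1\in T(\mathrm{Mat}_\ell)$.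
   Context: Let $m,n,\ell$ be non-negative integers and $\mathfrak{b}=(\mathfrak{b}_1,\dots,\mathfrak{b}_{m+n})$ a sequence with $m$ entries $\delta$ and $n$ entries $\epsilon$; $|i|=\bar0$ if $\mathfrak{b}_i=\delta$, $|i|=\bar1$ if $\mathfrak{b}_i=\epsilon$. Let $\pi$ be a rectangular array of boxes with $m+n$ rows and $\ell$ columns, row $i$ having parity $|i|$; for $1\le i\le m+n$, $1\le c\le\ell$ let $i\star c$ denote the box in row $i$ (counted from the top) and column $c$ (counted from the left). Let $V=\mathbb{C}^{M|N}$ ($M=m\ell$, $N=n\ell$) have homogeneous basis $\{v_a\}$ indexed by boxes, $v_a$ of parity that of its row, and $\mathfrak{gl}_{M|N}=\mathrm{End}(V)$ with matrix units $e_{a,b}$. $\mathrm{Mat}_\ell$ is the space of complex $\ell\times\ell$ matrices with matrix units $e_{a,c}$, and $T(\mathrm{Mat}_\ell)$ its tensor algebra. For $1\le i,j\le m+n$ define the linear map $t_{ij;\mathfrak{b}}:T(\mathrm{Mat}_\ell)\to U(\mathfrak{gl}_{M|N})$ by $t_{ij;\mathfrak{b}}(1)=\delta_{ij}$, $t_{ij;\mathfrak{b}}(e_{a,c})=(-1)^{|i|}e_{i\star a,\,j\star c}$ (extended linearly to $\mathrm{Mat}_\ell$), and $t_{ij;\mathfrak{b}}(x_1\otimes\cdots\otimes x_r)=\sum_{1\le i_1,\dots,i_{r-1}\le m+n}t_{ii_1;\mathfrak{b}}(x_1)t_{i_1i_2;\mathfrak{b}}(x_2)\cdots t_{i_{r-1}j;\mathfrak{b}}(x_r)$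 for $x_1,\dots,x_r\in\mathrm{Mat}_\ell$. *)

(* Defs.v *)
From HB Require Import structures.
From mathcomp Require Import all_boot all_order all_algebra.
From mathcomp Require Import complex.
From mathcomp Require Import Rstruct.
From Stdlib Require Import Rdefinitions.
Set Implicit Arguments. Unset Strict Implicit. Unset Printing Implicit Defensive.
Import Order.TTheory GRing.Theory Num.Theory.
Local Open Scope ring_scope.

Definition C : fieldType := Rdefinitions.R[i].

(* Boxes of the rectangular array pi: row i (0-based, < m+n), column c (0-based, < l).
   The box  i * c  of the paper is the pair (i, c). *)
Definition box (mn l : nat) := ('I_mn * 'I_l)%type.

(* Parity of a box = parity of its row; b i = true means b_i = epsilon (odd). *)
Definition bpar (mn l : nat) (b : 'I_mn -> bool) (a : box mn l) : bool := b a.1.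

Definition sgn {A : pzRingType} (p : bool) : A := (-1) ^+ p.

(* Defining relations of U(gl_{M|N}) on the matrix units e_{a,b} (a,b boxes):
   e_ab e_cd - (-1)^{|e_ab||e_cd|} e_cd e_ab
     = delta_bc e_ad - (-1)^{|e_ab||e_cd|} delta_ad e_cb,
   where |e_ab| = |a| + |b|.  A family E : box -> box -> A in an associative
   C-algebra A satisfies these relations iff a -> E induces an algebra map
   U(gl_{M|N}) -> A. *)
Definition gl_rel (mn l : nat) (b : 'I_mn -> bool) (A : algType C)
    (E : box mn l -> box mn l -> A) : Prop :=
  forall a1 b1 c1 d1 : box mn l,
    let p := (bpar b a1 (+) bpar b b1) && (bpar b c1 (+) bpar b d1) in
    E a1 b1 * E c1 d1 - sgn p * (E c1 d1 * E a1 b1)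
    = (b1 == c1)%:R * E a1 d1 - sgn p * ((a1 == d1)%:R * E c1 b1).

Definition scomm {A : pzRingType} (pa pb : bool) (u v : A) : A :=
  u * v - sgn (pa && pb) * (v * u).

Definition t1 (mn l : nat) (b : 'I_mn -> bool) (A : algType C)
    (E : box mn l -> box mn l -> A) (i j : 'I_mn) (x : 'M[C]_l) : A :=
  \sum_(a < l) \sum_(c < l) (x a c * sgn (b i)) *: E (i, a) (j, c).

(* t_{ij;b} on a pure tensor x_1 (x) ... (x) x_r, represented by the list
   [:: x_1; ...; x_r]; the empty list is the unit 1 of T(Mat_l). *)
Fixpoint tb (mn l : nat) (b : 'I_mn -> bool) (A : algType C)
    (E : box mn l -> box mn l -> A) (i j : 'I_mn) (xs : seq 'M[C]_l) : A :=
  match xs with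
  | [::] => (i == j)%:R
  | [:: x] => t1 b E i j x
  | x :: xs' => \sum_(p < mn) t1 b E i p x * tb b E p j xs'
  end.

(* Main.v *)
Require Import Defs.
From HB Require Import structures.
From mathcomp Require Import all_boot all_order all_algebra.
From mathcomp Require Import ring.
Import GRing.Theory.
Local Open Scope ring_scope.


Lemma sgnM (A : algType C) p (v : A) : sgn p * v = (sgn p : C) *: v.
Proof. by case: p; rewrite /sgn /= ?expr0 ?expr1 ?mul1r ?scale1r ?mulN1r ?scaleN1r. Qed.

Lemma sgnMr (A : algType C) p (v : A) : v * sgn p = (sgn p : C) *: v.
Proof. by case: p; rewrite /sgn /= ?expr0 ?expr1 ?mulr1 ?scale1r ?mulrN1 ?scaleN1r. Qed.

Lemma sgnX (R : pzRingType) p q : (sgn p : R) * sgn q = sgn (p (+) q).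
Proof. by rewrite /sgn signr_addb. Qed.

Lemma scomm_sum (A : algType C) a c (X : A) I (r : seq I) (F : I -> A) :
  scomm a c X (\sum_(p <- r) F p) = \sum_(p <- r) scomm a c X (F p).
Proof.
by rewrite /scomm mulr_sumr mulr_suml mulr_sumr -sumrB.
Qed.

Lemma scomm_mul (A : algType C) a u v (X Y Z : A) :
  scomm a (u (+) v) X (Y * Z) = scomm a u X Y * Z + sgn (a && u) * (Y * scomm a v X Z).
Proof.
rewrite /scomm !sgnM mulrBl mulrBr -scalerAl -scalerAr scalerBr scalerA sgnX.
have -> : (a && u) (+) (a && v) = a && (u (+) v) by case: a; case: u; case: v.
by rewrite !mulrA addrA subrK.
Qed.


Lemma tb_cons mn l (b : 'I_mn -> bool) (A : algType C) (E : box mn l -> box mn l -> A)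
  i j x xs : tb b E i j (x :: xs) = \sum_(p < mn) t1 b E i p x * tb b E p j xs.
Proof.
case: xs => [|y ys] //=.
rewrite (bigD1 j) //= eqxx mulr1 big1 ?addr0 // => p /negbTE ->.
by rewrite mulr0.
Qed.

Lemma sum4_swap (V : zmodType) n1 n2 n3 n4
  (F : 'I_n1 -> 'I_n2 -> 'I_n3 -> 'I_n4 -> V) :
  \sum_(d < n3) \sum_(e < n4) \sum_(a < n1) \sum_(c < n2) F a c d e =
  \sum_(a < n1) \sum_(c < n2) \sum_(d < n3) \sum_(e < n4) F a c d e.
Proof.
under eq_bigr => d _ do rewrite exchange_big.
under eq_bigr => d _ do under eq_bigr => a _ do rewrite exchange_big.
rewrite exchange_big.
by under eq_bigr => a _ do rewrite exchange_big.
Qed.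

Lemma t1_mul mn l (b : 'I_mn -> bool) (A : algType C) (E : box mn l -> box mn l -> A)
  i j h k x y : t1 b E i j x * t1 b E h k y =
  \sum_(a < l) \sum_(c < l) \sum_(d < l) \sum_(e < l)
     ((x a c * sgn (b i)) * (y d e * sgn (b h))) *: (E (i, a) (j, c) * E (h, d) (k, e)).
Proof.
rewrite /t1 mulr_suml; apply: eq_bigr => a _.
rewrite mulr_suml; apply: eq_bigr => c _.
rewrite mulr_sumr; apply: eq_bigr => d _.
rewrite mulr_sumr; apply: eq_bigr => e _.
by rewrite -scalerAl -scalerAr scalerA.
Qed.


Lemma collapse1 mn l (A : algType C) (h : 'I_mn) (c : 'I_l) (f : 'I_l -> 'I_l -> C) (G : 'I_l -> A) :
  \sum_(d < l) \sum_(e < l) f d e *: (((h, c) == (h, d))%:R * G e) = \sum_(e < l) f c e *: G e.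
Proof.
rewrite (bigD1 c) //= [X in _ + X]big1 ?addr0.
  by apply: eq_bigr => e _; rewrite eqxx mul1r.
move=> d dc; apply: big1 => e _.
by rewrite xpair_eqE eqxx /= eq_sym (negbTE dc) mul0r scaler0.
Qed.

Lemma collapse2 mn l (A : algType C) (i : 'I_mn) (a : 'I_l) (f : 'I_l -> C) (G : A) :
  \sum_(e < l) f e *: (((i, a) == (i, e))%:R * G) = f a *: G.
Proof.
rewrite (bigD1 a) //= [X in _ + X]big1 ?addr0.
  by rewrite eqxx mul1r.
move=> e ea.
by rewrite xpair_eqE eqxx /= eq_sym (negbTE ea) mul0r scaler0.
Qed.

Section Base.
Variables (mn l : nat) (b : 'I_mn -> bool) (A : algType C) (E : box mn l -> box mn l -> A).

Lemma L1 i j h k (x y : 'M[C]_l) :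
  \sum_(a < l) \sum_(c < l) \sum_(d < l) \sum_(e < l)
     ((x a c * sgn (b i)) * (y d e * sgn (b h))) *: (((j, c) == (h, d))%:R * E (i, a) (k, e))
  = (h == j)%:R * (sgn (b h) * t1 b E i k (x *m y)).
Proof.
case: (eqVneq h j) => [<-|hj]; last first.
  rewrite mul0r big1 // => a _; rewrite big1 // => c _; rewrite big1 // => d _.
  rewrite big1 // => e _.
  by rewrite xpair_eqE eq_sym (negbTE hj) /= mul0r scaler0.
rewrite ?eqxx mul1r sgnM /t1 scaler_sumr; apply: eq_bigr => a _.
under eq_bigr => c _ do rewrite collapse1.
rewrite exchange_big scaler_sumr; apply: eq_bigr => e _.
rewrite -scaler_suml scalerA; congr (_ *: _).
rewrite mxE mulr_suml mulr_sumr; apply: eq_bigr => c _.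
ring.
Qed.

Lemma L2 i j h k (x y : 'M[C]_l) :
  \sum_(a < l) \sum_(c < l) \sum_(d < l) \sum_(e < l)
     ((x a c * sgn (b i)) * (y d e * sgn (b h))) *: (((i, a) == (k, e))%:R * E (h, d) (j, c))
  = (i == k)%:R * (sgn (b i) * t1 b E h j (y *m x)).
Proof.
case: (eqVneq i k) => [<-|ik]; last first.
  rewrite mul0r big1 // => a _; rewrite big1 // => c _; rewrite big1 // => d _.
  rewrite big1 // => e _.
  by rewrite xpair_eqE (negbTE ik) /= mul0r scaler0.
rewrite ?eqxx mul1r sgnM /t1.
under eq_bigr => a _ do under eq_bigr => c _ do under eq_bigr => d _ do rewrite collapse2.
rewrite exchange_big.
under eq_bigr => c _ do rewrite exchange_big.
rewrite exchange_big scaler_sumr; apply: eq_bigr => d _.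
rewrite scaler_sumr; apply: eq_bigr => c _.
rewrite -scaler_suml scalerA; congr (_ *: _).
rewrite mxE mulr_suml mulr_sumr; apply: eq_bigr => a _.
ring.
Qed.

End Base.


Lemma sum4_lin (V : lmodType C) l (s : C) (F G : 'I_l -> 'I_l -> 'I_l -> 'I_l -> V) :
  \sum_(a < l) \sum_(c < l) \sum_(d < l) \sum_(e < l) F a c d e
  - s *: \sum_(a < l) \sum_(c < l) \sum_(d < l) \sum_(e < l) G a c d e =
  \sum_(a < l) \sum_(c < l) \sum_(d < l) \sum_(e < l) (F a c d e - s *: G a c d e).
Proof.
rewrite scaler_sumr -sumrB; apply: eq_bigr => a _.
rewrite scaler_sumr -sumrB; apply: eq_bigr => c _.
rewrite scaler_sumr -sumrB; apply: eq_bigr => d _.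
by rewrite scaler_sumr -sumrB.
Qed.

Lemma base mn l (b : 'I_mn -> bool) (A : algType C) (E : box mn l -> box mn l -> A)
  (hE : gl_rel b E) i j h k (x y : 'M[C]_l) :
  scomm (b i (+) b j) (b h (+) b k) (t1 b E i j x) (t1 b E h k y) =
  sgn (b i && b j (+) b i && b h (+) b j && b h) *
   ((h == j)%:R * t1 b E i k (x *m y) - t1 b E h j (y *m x) * (i == k)%:R).
Proof.
rewrite /scomm t1_mul (t1_mul _ _ _ _ _ h k i j y x) [X in _ - _ * X]sum4_swap [X in _ - X]sgnM.
set s := (sgn ((b i (+) b j) && (b h (+) b k)) : C).
rewrite sum4_lin.
transitivity (\sum_(a < l) \sum_(c < l) \sum_(d < l) \sum_(e < l)
     ((x a c * sgn (b i)) * (y d e * sgn (b h))) *: (((j, c) == (h, d))%:R * E (i, a) (k, e))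
  - s *: \sum_(a < l) \sum_(c < l) \sum_(d < l) \sum_(e < l)
     ((x a c * sgn (b i)) * (y d e * sgn (b h))) *: (((i, a) == (k, e))%:R * E (h, d) (j, c))).
  rewrite sum4_lin; apply: eq_bigr => a _; apply: eq_bigr => c _; apply: eq_bigr => d _.
  apply: eq_bigr => e _.
  have hE' := hE (i, a) (j, c) (h, d) (k, e); rewrite /bpar /= in hE'.
  have -> : E (i, a) (j, c) * E (h, d) (k, e) =
     ((j, c) == (h, d))%:R * E (i, a) (k, e) -
     sgn ((b i (+) b j) && (b h (+) b k)) * (((i, a) == (k, e))%:R * E (h, d) (j, c))
     + sgn ((b i (+) b j) && (b h (+) b k)) * (E (h, d) (k, e) * E (i, a) (j, c)).
    by rewrite -hE' subrK.
  rewrite !sgnM -/s scalerDr scalerBr !scalerA.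
  have -> : s * (y d e * sgn (b h) * (x a c * sgn (b i))) = x a c * sgn (b i) * (y d e * sgn (b h)) * s by ring.
  by rewrite addrK [s * _]mulrC.
rewrite L1 L2 /s.
case: (eqVneq h j) => [<-|hj]; case: (eqVneq i k) => [<-|ik];
  rewrite ?eqxx ?(negbTE hj) ?(negbTE ik) /= ?mul1r ?mulr1 ?mul0r ?mulr0 ?scaler0 ?sub0r ?subr0 ?scalerN ?mulrN ?mulrBr !sgnM ?scalerN ?scalerBr ?scalerA ?scaler0 ?oppr0 //.
all: try (congr (_ *: _ - _ *: _); by rewrite /sgn; case: (b i); case: (b j); case: (b h); case: (b k); rewrite /= ?expr0 ?expr1 ?mulN1r ?opprK ?mul1r ?mulr1).
all: try (congr (- (_ *: _)); by rewrite /sgn; case: (b i); case: (b j); case: (b h); case: (b k); rewrite /= ?expr0 ?expr1 ?mulN1r ?opprK ?mul1r ?mulr1).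
all: try (congr (_ *: _); by rewrite /sgn; case: (b i); case: (b j); case: (b h); case: (b k); rewrite /= ?expr0 ?expr1 ?mulN1r ?opprK ?mul1r ?mulr1).
Qed.
Definition RHSf mn l (b : 'I_mn -> bool) (A : algType C) (E : box mn l -> box mn l -> A)
  i j h k (x : 'M[C]_l) (ys : seq 'M[C]_l) : A :=
    \sum_(s < size ys)
      (tb b E h j (take s ys) * tb b E i k ((x *m nth 0 ys s) :: drop s.+1 ys)
       - tb b E h j (rcons (take s ys) (nth 0 ys s *m x)) * tb b E i k (drop s.+1 ys)).

Arguments RHSf {mn l} b {A} E.

Lemma tb_nil mn l (b : 'I_mn -> bool) (A : algType C) (E : box mn l -> box mn l -> A) i j :
  tb b E i j [::] = (i == j)%:R.
Proof. by []. Qed.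
Lemma tb_one mn l (b : 'I_mn -> bool) (A : algType C) (E : box mn l -> box mn l -> A) i j z :
  tb b E i j [:: z] = t1 b E i j z.
Proof. by []. Qed.
Opaque tb.
Lemma step mn l (b : 'I_mn -> bool) (A : algType C) (E : box mn l -> box mn l -> A)
  (hE : gl_rel b E) i j x y1 rest
  (IH : forall h k, scomm (b i (+) b j) (b h (+) b k) (t1 b E i j x) (tb b E h k rest)
     = sgn (b i && b j (+) b i && b h (+) b j && b h) * RHSf b E i j h k x rest) h k :
  scomm (b i (+) b j) (b h (+) b k) (t1 b E i j x) (tb b E h k (y1 :: rest))
     = sgn (b i && b j (+) b i && b h (+) b j && b h) * RHSf b E i j h k x (y1 :: rest).
Proof.
have hp : forall p, b h (+) b k = (b h (+) b p) (+) (b p (+) b k).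
  by move=> p; case: (b h); case: (b p); case: (b k).
rewrite tb_cons scomm_sum.
under eq_bigr => p _ do rewrite (hp p) scomm_mul (base _ _ _ _ _ hE) IH.
rewrite /RHSf big_ord_recl /=.

under [X in _ = _ * (_ + X)]eq_bigr => s _ do rewrite add0n /bump leq0n add1n.
rewrite big_split /= mulrDr drop0; congr (_ + _).
  under eq_bigr => p _ do rewrite -mulrA.
  rewrite -mulr_sumr; congr (_ * _).
  under eq_bigr => p _ do rewrite mulrBl.
  rewrite sumrB tb_nil tb_one tb_cons mulr_sumr; congr (_ - _).
    by apply: eq_bigr => p _; rewrite mulrA.
  rewrite (bigD1 i) //= eqxx mulr1 [X in _ + X]big1 ?addr0 // => p.
  by rewrite eq_sym => /negbTE ->; rewrite mulr0 mul0r.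
have hs : forall p, (sgn ((b i (+) b j) && (b h (+) b p)) : C) *
    sgn (b i && b j (+) b i && b p (+) b j && b p) =
    sgn (b i && b j (+) b i && b h (+) b j && b h).
  by move=> p; rewrite sgnX; congr sgn; case: (b i); case: (b j); case: (b h); case: (b p).
under eq_bigr => p _ do rewrite !sgnM -scalerAr scalerA (hs p).
rewrite -scaler_sumr [RHS]sgnM; congr (_ *: _).
under [LHS]eq_bigr => p _ do rewrite mulr_sumr.
rewrite exchange_big /=; apply: eq_bigr => s _.
rewrite (tb_cons _ _ _ _ _ h j y1 (take s rest)) (tb_cons _ _ _ _ _ h j y1 (rcons _ _)).
rewrite !mulr_suml -sumrB; apply: eq_bigr => p _.
by rewrite mulrBr !mulrA.
Qed.

Theorem lemma4p1 (m n l : nat) (b : 'I_(m + n) -> bool)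
  (hb : #|[pred i | ~~ b i]| = m)
  (A : algType C) (E : box (m + n) l -> box (m + n) l -> A)
  (hE : gl_rel b E)
  (i j h k : 'I_(m + n)) (x : 'M[C]_l) (ys : seq 'M[C]_l)
  (hr : (1 <= size ys)%N) :
  scomm (b i (+) b j) (b h (+) b k) (tb b E i j [:: x]) (tb b E h k ys)
  = sgn (b i && b j (+) b i && b h (+) b j && b h) *
    \sum_(s < size ys)
      (tb b E h j (take s ys) * tb b E i k ((x *m nth 0 ys s) :: drop s.+1 ys)
       - tb b E h j (rcons (take s ys) (nth 0 ys s *m x)) * tb b E i k (drop s.+1 ys)).
Proof.
have key : forall ys h k, (1 <= size ys)%N ->
    scomm (b i (+) b j) (b h (+) b k) (t1 b E i j x) (tb b E h k ys)
    = sgn (b i && b j (+) b i && b h (+) b j && b h) * RHSf b E i j h k x ys.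
  elim => [//|y1 rest IH] h' k' _.
  case: rest IH => [|y2 r] IH.
    rewrite /RHSf big_ord1 /= ?tb_one ?tb_nil.
    exact: base.
  apply: step => //.
  by move=> h0 k0; apply: IH.
by rewrite tb_one key.
Qed.
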